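(* Let $\{\mathcal{C}_n\}$ be a sequence of binary linear codes with blocklengths $N_n\to\infty$ and rates $r_n\to r$ for some $r\in(0,1)$. Suppose there is a constant $C>0$, independent of $p$ and $n$, such that the average EXIT function $h^{(n)}$ of $\mathcal{C}_n$ satisfies $$\frac{d h^{(n)}(p)}{dp}\ge C\log(N_n)\,h^{(n)}(p)\big(1-h^{(n)}(p)\big)\quad\text{for all }0<p<1,$$ and suppose the minimum distances $d^{(n)}_{\min}$ satisfy $\lim_{n\to\infty}\frac{\log d^{(n)}_{\min}}{\log N_n}=1$. Then $\{\mathcal{C}_n\}$ is capacity achieving on the BEC under block-MAP decoding.
   Context: Binary linear codes are assumed proper and of minimum distance at least $2$; rate $=K/N$; $\log$ is the natural logarithm. A uniform codeword $\underline{X}$ is sent over $\mathrm{BEC}(p)$ (each bit erased independently with probability $p$), giving $\underline{Y}$. The average EXIT function is $h(p)=\frac1N\sum_{i=1}^N H(X_i\mid\underline{Y}_{\sim i})$ (entropy in bits; $\underline{Y}_{\sim i}$ omits coordinate $i$). The block-MAP erasure probability $P_B(p)$ is the probability that $\underline{X}$ is not uniquely determined by $\underline{Y}$. A sequence of codes with rates $r_n\to r\in(0,1)$ is capacity achieving on the BEC under block-MAP decoding if $\lim_n P_B^{(n)}(p)=0$ for every $p\in[0,1-r)$. *)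

(* Defs.v *)
From Stdlib Require Import Reals.
From mathcomp Require Import all_boot.

Set Implicit Arguments.
Unset Strict Implicit.
Unset Printing Implicit Defensive.

Definition word (N : nat) := {ffun 'I_N -> bool}.
Definition code (N : nat) := {set word N}.

Definition zerow (N : nat) : word N := [ffun _ => false].
Definition xorw (N : nat) (x y : word N) : word N := [ffun i => xorb (x i) (y i)].

Definition is_linear (N : nat) (C : code N) : Prop :=
  zerow N \in C /\ (forall x y, x \in C -> y \in C -> xorw x y \in C).

Definition proper_code (N : nat) (C : code N) : Prop :=
  forall i : 'I_N, exists x, x \in C /\ x i = true.

Definition weight (N : nat) (x : word N) : nat := #|[set i | x i]|.

Definition dmin (N : nat) (C : code N) : nat :=
  \big[minn/N]_(x in C | x != zerow N) weight x.

Local Open Scope R_scope.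

Definition log2 (t : R) : R := ln t / ln 2.

Definition rate (N : nat) (C : code N) : R := log2 (INR #|C|) / INR N.

Definition pat_prob (N : nat) (p : R) (E : {set 'I_N}) : R :=
  p ^ #|E| * (1 - p) ^ (N - #|E|).

(* Block-MAP erasure probability: X uniform on C, erasure pattern E; the
   observation Y determines X uniquely iff no other codeword agrees with X
   on all non-erased positions. *)
Definition block_erasure (N : nat) (C : code N) (p : R) : R :=
  \big[Rplus/R0]_(x in C) \big[Rplus/R0]_(E : {set 'I_N})
    (/ INR #|C| * pat_prob p E *
     (if [exists x' in C, (x' != x) && [forall j, (j \notin E) ==> (x' j == x j)]]
      then 1 else 0)).

Definition xlog2 (t : R) : R := if Req_EM_T t 0 then 0 else t * log2 t.
Definition h2 (q : R) : R := - xlog2 q - xlog2 (1 - q).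

(* H(X_i | Y_{~i} = y) where y is the observation produced by codeword x and
   erasure pattern E, coordinate i being omitted: the posterior of X is uniform
   on the codewords agreeing with x at every non-erased position j <> i. *)
Definition cond_entropy_i (N : nat) (C : code N) (i : 'I_N) (x : word N)
    (E : {set 'I_N}) : R :=
  let S := [set x' in C | [forall j, ((j \notin E) && (j != i)) ==> (x' j == x j)]] in
  h2 (INR #|[set x' in S | x' i]| / INR #|S|).

(* H(X_i | Y_{~i}) = E_{(X,Y)} [ H(X_i | Y_{~i} = y) ] *)
Definition exit_i (N : nat) (C : code N) (i : 'I_N) (p : R) : R :=
  \big[Rplus/R0]_(x in C) \big[Rplus/R0]_(E : {set 'I_N})
    (/ INR #|C| * pat_prob p E * cond_entropy_i C i x E).

Definition exit_fun (N : nat) (C : code N) (p : R) : R :=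
  / INR N * \big[Rplus/R0]_(i : 'I_N) exit_i C i p.

(* Main.v *)
Require Import Defs.
From HB Require Import structures.
From Stdlib Require Import Reals Lra Psatz ClassicalEpsilon.
From mathcomp Require Import all_boot.
Set Implicit Arguments.
Unset Strict Implicit.
Unset Printing Implicit Defensive.

Section Comb.
Variable N : nat.
Implicit Types (C : code N) (x y z w : word N) (F E : {set 'I_N}).

Definition Csub C F := [set z in C | [forall j, (j \notin F) ==> ~~ z j]].
Definition ub C (i : 'I_N) F := [exists z, (z \in Csub C F) && z i].

Lemma xorwE x y j : xorw x y j = xorb (x j) (y j).
Proof. by rewrite /xorw ffunE. Qed.

Lemma xorwK x y : xorw x (xorw x y) = y.
Proof. by apply/ffunP => j; rewrite !xorwE; case: (x j); case: (y j). Qed.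

Lemma xorw_inj x : injective (xorw x).
Proof. by move=> y1 y2 H; rewrite -(xorwK x y1) H xorwK. Qed.

Lemma xorwC x y : xorw x y = xorw y x.
Proof. by apply/ffunP => j; rewrite !xorwE; case: (x j); case: (y j). Qed.

Lemma xorw_eq0 x y : (xorw x y == zerow N) = (x == y).
Proof.
apply/eqP/eqP => [H|->].
  apply/ffunP => j; have := congr1 (fun f : word N => f j) H; rewrite xorwE /zerow ffunE.
  by case: (x j); case: (y j).
by apply/ffunP => j; rewrite xorwE /zerow ffunE; case: (y j).
Qed.

Lemma card_inj_le (A B : {set word N}) (f : word N -> word N) :
  injective f -> (forall z, z \in A -> f z \in B) -> (#|A| <= #|B|)%N.
Proof.
move=> fi H; rewrite -(card_imset _ fi); apply: subset_leq_card.
by apply/subsetP => y /imsetP [z zA ->]; apply: H.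
Qed.

Lemma card_xor_eq (A B : {set word N}) w :
  (forall z, z \in A -> xorw w z \in B) -> (forall z, z \in B -> xorw w z \in A) ->
  #|A| = #|B|.
Proof.
move=> H1 H2; apply/eqP; rewrite eqn_leq.
by rewrite (card_inj_le (@xorw_inj w) H1) (card_inj_le (@xorw_inj w) H2).
Qed.

Variable C : code N.
Hypothesis Clin : is_linear C.

Lemma zero_Csub F : zerow N \in Csub C F.
Proof.
rewrite inE; case: Clin => -> _ /=; apply/forallP => j; apply/implyP => _.
by rewrite /zerow ffunE.
Qed.

Lemma xor_in x y : x \in C -> y \in C -> xorw x y \in C.
Proof. by case: Clin => _; apply. Qed.

Lemma Csub_xor F x y : x \in Csub C F -> y \in Csub C F -> xorw x y \in Csub C F.
Proof.
rewrite !inE => /andP [xC /forallP Hx] /andP [yC /forallP Hy].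
rewrite xor_in //=; apply/forallP => j; apply/implyP => jF.
have := implyP (Hx j) jF; have := implyP (Hy j) jF.
by rewrite xorwE; case: (x j); case: (y j).
Qed.

Lemma card_Csub_step (i : 'I_N) F : i \notin F ->
  #|Csub C (i |: F)| = ((if ub C i (i |: F) then 2 else 1) * #|Csub C F|)%N.
Proof.
move=> iF.
have split : #|Csub C (i |: F)| =
   (#|[set z in Csub C (i |: F) | z i]| + #|Csub C F|)%N.
  rewrite -(cardsID [set z : word N | z i] (Csub C (i |: F))); congr (_ + _)%N.
    by apply: eq_card => z; rewrite !inE andbC.
  apply: eq_card => z; rewrite !inE.
  apply/idP/idP.
    move=> /and3P [zi zC /forallP Hz]; rewrite zC /=.
    apply/forallP => j; apply/implyP => jF.
    case: (eqVneq j i) => [->|ji]; first by [].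
    by apply: (implyP (Hz j)); rewrite !inE negb_or ji.
  move=> /andP [zC /forallP Hz]; rewrite zC /=.
  have zi : ~~ z i by apply: (implyP (Hz i)).
  rewrite zi /=; apply/forallP => j; apply/implyP; rewrite !inE negb_or => /andP [_ jF].
  exact: (implyP (Hz j)).
rewrite split; case: ifP => [/existsP [w /andP [wS wi]]|nu].
  rewrite mul2n -addnn; congr (_ + _)%N.
  apply: (@card_xor_eq _ _ w).
    move=> z; rewrite inE => /andP [zS zi].
    have := Csub_xor wS zS; rewrite !inE => /andP [xC /forallP H].
    rewrite xC /=; apply/forallP => j; apply/implyP => jF.
    case: (eqVneq j i) => [->|ji]; first by rewrite xorwE wi zi.
    by apply: (implyP (H j)); rewrite !inE negb_or ji.
  move=> z zF.
  have zS : z \in Csub C (i |: F).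
    move: zF; rewrite !inE => /andP [-> /forallP H] /=; apply/forallP => j; apply/implyP.
    by rewrite !inE negb_or => /andP [_ jF]; apply: (implyP (H j)).
  rewrite inE Csub_xor //= xorwE wi /=.
  by move: zF; rewrite !inE => /andP [_ /forallP H]; apply: (implyP (H i)).
rewrite mul1n.
suff -> : [set z in Csub C (i |: F) | z i] = set0 by rewrite cards0.
apply/setP => z; rewrite [in LHS]inE [in RHS]inE; apply/negbTE; apply/negP => /andP [zS zi].
by move/negbT/negP: nu; apply; apply/existsP; exists z; rewrite zS zi.
Qed.

End Comb.


Local Open Scope R_scope.

Lemma Rplus_assoc' : associative Rplus. Proof. by move=> x y z; rewrite Rplus_assoc. Qed.
HB.instance Definition _ := Monoid.isComLaw.Build R R0 Rplus Rplus_assoc' Rplus_comm Rplus_0_l.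

Notation "\rsum_ ( i <- s | P ) F" := (\big[Rplus/R0]_(i <- s | P) F)
  (at level 41, F at level 41, i, s at level 50).

Lemma rsum_mull (I : Type) (s : seq I) (P : pred I) (F : I -> R) (a : R) :
  \big[Rplus/R0]_(i <- s | P i) (a * F i) = a * \big[Rplus/R0]_(i <- s | P i) F i.
Proof.
elim: s => [|x s IH]; first by rewrite !big_nil; ring.
rewrite !big_cons; case: (P x); rewrite IH //; ring.
Qed.

Lemma rsum_le (I : Type) (s : seq I) (P : pred I) (F G : I -> R) :
  (forall i, P i -> F i <= G i) ->
  \big[Rplus/R0]_(i <- s | P i) F i <= \big[Rplus/R0]_(i <- s | P i) G i.
Proof.
move=> H; elim: s => [|x s IH]; first by rewrite !big_nil; lra.
rewrite !big_cons; case Px: (P x) => //; have := H x Px; lra.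
Qed.

Lemma rsum_ge0 (I : Type) (s : seq I) (P : pred I) (F : I -> R) :
  (forall i, P i -> 0 <= F i) -> 0 <= \big[Rplus/R0]_(i <- s | P i) F i.
Proof.
move=> H; elim: s => [|x s IH]; first by rewrite !big_nil; lra.
rewrite !big_cons; case Px: (P x) => //; have := H x Px; lra.
Qed.

Lemma rsum_split (I : Type) (s : seq I) (P : pred I) (F G : I -> R) :
  \big[Rplus/R0]_(i <- s | P i) (F i + G i) =
  \big[Rplus/R0]_(i <- s | P i) F i + \big[Rplus/R0]_(i <- s | P i) G i.
Proof.
elim: s => [|x s IH]; first by rewrite !big_nil; lra.
rewrite !big_cons; case Px: (P x) => //; rewrite IH; ring.
Qed.

Lemma rsum_opp (I : Type) (s : seq I) (P : pred I) (F : I -> R) :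
  \big[Rplus/R0]_(i <- s | P i) (- F i) = - \big[Rplus/R0]_(i <- s | P i) F i.
Proof.
elim: s => [|x s IH]; first by rewrite !big_nil; lra.
rewrite !big_cons; case Px: (P x) => //; rewrite IH; ring.
Qed.

Lemma rsum_INR (I : Type) (s : seq I) (P : pred I) (F : I -> nat) :
  \big[Rplus/R0]_(i <- s | P i) INR (F i) = INR (\sum_(i <- s | P i) F i).
Proof.
elim: s => [|x s IH]; first by rewrite !big_nil.
rewrite !big_cons; case Px: (P x) => //; rewrite IH plus_INR //.
Qed.

Definition b2R (b : bool) : R := if b then 1 else 0.

Lemma rsum_b2R (T : finType) (P : pred T) :
  \big[Rplus/R0]_(i : T) b2R (P i) = INR #|[set i | P i]|.
Proof.
rewrite -sum1dep_card -rsum_INR [RHS]big_mkcond.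
by apply: eq_bigr => i _; rewrite /b2R; case: (P i).
Qed.

Lemma rsum_const (T : finType) (A : {set T}) (k : R) :
  \big[Rplus/R0]_(i in A) k = INR #|A| * k.
Proof.
rewrite -sum1_card -rsum_INR Rmult_comm -rsum_mull; apply: eq_bigr => i _; simpl; ring.
Qed.

Lemma rsum_derive (I : Type) (s : seq I) (P : pred I) (F F' : I -> R -> R) (x : R) :
  (forall i, P i -> derivable_pt_lim (F i) x (F' i x)) ->
  derivable_pt_lim (fun y => \big[Rplus/R0]_(i <- s | P i) F i y) x
     (\big[Rplus/R0]_(i <- s | P i) F' i x).
Proof.
move=> H; elim: s => [|a s IH].
  rewrite big_nil; apply: (derivable_pt_lim_ext (fun _ => R0)); first by move=> y; rewrite big_nil.
  exact: derivable_pt_lim_const.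
rewrite big_cons; case Pa: (P a).
  apply: (derivable_pt_lim_ext (fun y => F a y + \big[Rplus/R0]_(i <- s | P i) F i y)).
    by move=> y; rewrite big_cons Pa.
  exact: derivable_pt_lim_plus (H a Pa) IH.
apply: (derivable_pt_lim_ext (fun y => \big[Rplus/R0]_(i <- s | P i) F i y)) => //.
by move=> y; rewrite big_cons Pa.
Qed.


Lemma ln2_pos : 0 < ln 2.
Proof. rewrite -ln_1; apply: ln_increasing; lra. Qed.

Lemma xlog2_0 : xlog2 0 = 0.
Proof. rewrite /xlog2; destruct Req_EM_T; simpl; [lra|ring]. Qed.

Lemma xlog2_1 : xlog2 1 = 0.
Proof. rewrite /xlog2; destruct Req_EM_T; simpl; first lra. rewrite /log2 ln_1 /Rdiv; ring. Qed.

Lemma xlog2_half : xlog2 (/2) = - /2.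
Proof.
rewrite /xlog2; destruct Req_EM_T; simpl; first lra.
rewrite /log2 ln_Rinv; last lra. field; have := ln2_pos; lra.
Qed.

Lemma h2_0 : h2 0 = 0.
Proof. by rewrite /h2 Rminus_0_r xlog2_0 xlog2_1; ring. Qed.

Lemma h2_1 : h2 1 = 0.
Proof. by rewrite /h2 Rminus_diag xlog2_0 xlog2_1; ring. Qed.

Lemma h2_half : h2 (/2) = 1.
Proof.
rewrite /h2; have -> : 1 - /2 = /2 by field.
rewrite xlog2_half; lra.
Qed.


Section CE.
Variable N : nat.
Variable C : code N.
Hypothesis Clin : is_linear C.

Lemma ce_val (i : 'I_N) x E : x \in C ->
  cond_entropy_i C i x E = b2R (ub C i (i |: E)).
Proof.
move=> xC; rewrite /cond_entropy_i.
set S := [set x' in C | _].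
have xS : x \in S by rewrite inE xC /=; apply/forallP => j; apply/implyP.
have inS : forall y, y \in S -> xorw x y \in Csub C (i |: E).
  move=> y; rewrite inE => /andP [yC /forallP H]; rewrite inE xor_in //=.
  apply/forallP => j; apply/implyP; rewrite !inE negb_or => /andP [ji jE].
  rewrite xorwE; have := implyP (H j); rewrite jE ji => /(_ isT) /eqP ->; by case: (x j).
have Spos : (0 < #|S|)%N by apply/card_gt0P; exists x.
case nu: (ub C i (i |: E)); first move: nu => /existsP [w /andP [wS wi]].
  have wmap : forall y, y \in S -> xorw w y \in S.
    move=> y; rewrite inE => /andP [yC /forallP H]; rewrite inE.
    move: wS; rewrite inE => /andP [wC /forallP Hw].
    rewrite xor_in //=; apply/forallP => j; apply/implyP => Hj.
    have := implyP (H j) Hj => /eqP <-; rewrite xorwE.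
    have := implyP (Hw j); rewrite !inE negb_or.
    by move: Hj => /andP [-> ->] => /(_ isT) /negbTE ->.
  have eq01 : #|[set y in S | y i]| = #|[set y in S | ~~ y i]|.
    apply: (@card_xor_eq _ _ _ w) => y; rewrite inE => /andP [yS yi];
      rewrite inE wmap //= xorwE wi /=; by [rewrite yi | rewrite (negbTE yi)].
  have tot : #|S| = (#|[set y in S | y i]| + #|[set y in S | ~~ y i]|)%N.
    rewrite -(cardsID [set y : word N | y i] S); congr (_ + _)%N;
      by apply: eq_card => y; rewrite !inE andbC.
  rewrite tot -eq01 /b2R.
  have p1 : (0 < #|[set y in S | y i]|)%N.
    by move: Spos; rewrite tot -eq01 addnn double_gt0.
  have -> : INR #|[set y in S | y i]| / INR (#|[set y in S | y i]| + #|[set y in S | y i]|) = /2.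
    rewrite plus_INR; have : 0 < INR #|[set y in S | y i]| by apply: lt_0_INR; apply/ltP.
    move=> ?; field; lra.
  exact: h2_half.
have same : forall y, y \in S -> y i = x i.
  move=> y yS; apply/eqP/negP => neq; move/negbT/negP: nu; apply.
  apply/existsP; exists (xorw x y); rewrite inS //= xorwE.
  by move: neq; case: (x i); case: (y i).
rewrite /b2R; case xi: (x i).
  have -> : [set x' in S | x' i] = S by apply/setP => y; rewrite inE andb_idr // => /same ->.
  rewrite /Rdiv Rinv_r; first exact: h2_1.
  by apply: not_0_INR; move: Spos; case: #|S|.
have -> : [set x' in S | x' i] = set0.
  by apply/setP => y; rewrite [in LHS]inE [in RHS]inE; apply/negbTE/negP => /andP [yS]; rewrite (same y yS) xi.
rewrite cards0 /Rdiv Rmult_0_l; exact: h2_0.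
Qed.
End CE.


Section Russo.
Variable N : nat.
Implicit Types (E : {set 'I_N}).

Definition pat1 (p : R) E : R := p ^ #|E| * (1 - p) ^ (N - #|E|).-1.
Definition tog (i : 'I_N) E := if i \in E then E :\ i else i |: E.

Lemma togK i : involutive (tog i).
Proof.
move=> E; rewrite /tog; case iE: (i \in E).
  by rewrite setD11 setD1K.
by rewrite setU11 setU1K // iE.
Qed.

Lemma rsum_toggle (i : 'I_N) (F : {set 'I_N} -> R) :
  \big[Rplus/R0]_(E : {set 'I_N}) F E =
  \big[Rplus/R0]_(E : {set 'I_N} | i \notin E) (F (i |: E) + F E).
Proof.
rewrite (bigID (fun E => i \in E)) /= rsum_split; congr (_ + _).
rewrite (reindex_inj (can_inj (togK i))) /=.
apply: eq_big => E; rewrite /tog; case iE: (i \in E) => //=.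
- by rewrite setD11.
- by rewrite setU11.
- by rewrite setD11.
Qed.

Lemma card_lt_notin (i : 'I_N) E : i \notin E -> (#|E| < N)%N.
Proof.
move=> iE; have : E \proper [set: 'I_N].
  by rewrite properEneq subsetT andbT; apply/eqP => H; move: iE; rewrite H inE.
by move/proper_card; rewrite cardsT card_ord.
Qed.

Lemma pat_add (i : 'I_N) E p : i \notin E -> pat_prob p (i |: E) = p * pat1 p E.
Proof.
move=> iE; rewrite /pat_prob /pat1 cardsU1 iE add1n /=.
rewrite subnS; simpl; ring.
Qed.

Lemma pat_same (i : 'I_N) E p : i \notin E -> pat_prob p E = (1 - p) * pat1 p E.
Proof.
move=> iE; rewrite /pat_prob /pat1.
have := card_lt_notin iE => Hn.
have -> : (N - #|E| = (N - #|E|).-1.+1)%N by rewrite prednK // subn_gt0.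
simpl; ring.
Qed.

Lemma sum_pat_g (i : 'I_N) (g : {set 'I_N} -> R) p :
  \big[Rplus/R0]_(E : {set 'I_N}) (pat_prob p E * g (i |: E)) =
  \big[Rplus/R0]_(E : {set 'I_N} | i \notin E) (pat1 p E * g (i |: E)).
Proof.
rewrite (rsum_toggle i); apply: eq_bigr => E iE.
by rewrite setUA setUid pat_add // (pat_same (i:=i)) //; ring.
Qed.

Definition dpat (p : R) E : R :=
  INR #|E| * p ^ (#|E|).-1 * (1 - p) ^ (N - #|E|)
  - INR (N - #|E|) * p ^ #|E| * (1 - p) ^ (N - #|E|).-1.

Lemma pat_derive E p : derivable_pt_lim (fun q => pat_prob q E) p (dpat p E).
Proof.
rewrite /pat_prob /dpat.
apply: (derivable_pt_lim_ext (fun q => (fun y => y ^ #|E|) q * (fun y => (fun z => z ^ (N - #|E|)) ((fun y => 1 - y) y)) q)) => //.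
have H1 := derivable_pt_lim_pow p #|E|.
have H2 : derivable_pt_lim (fun y => (1 - y) ^ (N - #|E|)) p (INR (N - #|E|) * (1 - p) ^ (N - #|E|).-1 * (0 - 1)).
  apply: (derivable_pt_lim_comp (fun y => 1 - y) (fun z => z ^ (N - #|E|))).
    apply: derivable_pt_lim_minus; [exact: derivable_pt_lim_const | exact: derivable_pt_lim_id].
  exact: derivable_pt_lim_pow.
have := derivable_pt_lim_mult _ _ _ _ _ H1 H2.
match goal with |- derivable_pt_lim _ _ ?a -> derivable_pt_lim _ _ ?b => replace b with a end.
  by [].
rewrite /mult_fct /=; ring.
Qed.

Lemma russo (f : {set 'I_N} -> R) p :
  derivable_pt_lim (fun q => \big[Rplus/R0]_(E : {set 'I_N}) (pat_prob q E * f E)) p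
    (\big[Rplus/R0]_(i : 'I_N) \big[Rplus/R0]_(E : {set 'I_N} | i \notin E)
        (pat1 p E * (f (i |: E) - f E))).
Proof.
have H := @rsum_derive _ (index_enum {set 'I_N}) xpredT
   (fun E q => pat_prob q E * f E) (fun E q => dpat q E * f E) p.
have := H (fun E _ => derivable_pt_lim_scal_right _ _ _ _ (pat_derive E p)).
match goal with |- derivable_pt_lim _ _ ?a -> derivable_pt_lim _ _ ?b => replace b with a end.
  by [].
transitivity (\big[Rplus/R0]_(E : {set 'I_N}) \big[Rplus/R0]_(i : 'I_N)
   (f E * ((p ^ (#|E|).-1 * (1 - p) ^ (N - #|E|)) * b2R (i \in E)) +
     - (f E * ((p ^ #|E| * (1 - p) ^ (N - #|E|).-1) * b2R (i \notin E))))).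
  apply: eq_bigr => E _.
  rewrite rsum_split rsum_opp !rsum_mull.
  rewrite (rsum_b2R (fun i => i \in E)) (rsum_b2R (fun i => i \notin E)).
  have -> : [set i | i \in E] = E by apply/setP => i; rewrite inE.
  have -> : #|[set i | i \notin E]| = (N - #|E|)%N.
    have -> : [set i | i \notin E] = ~: E by apply/setP => i; rewrite !inE.
    by rewrite cardsCs card_ord setCK.
  rewrite /dpat; ring.
rewrite exchange_big /=; apply: eq_bigr => i _.
rewrite (rsum_toggle i); apply: eq_bigr => E iE.
rewrite /b2R setU11 (negbTE iE) /= cardsU1 iE add1n /= /pat1.
have := card_lt_notin iE => Hn.
rewrite subnS; set A := p ^ #|E|; set B := (1 - p) ^ _; set B2 := (1-p) ^ _; set D := p ^ _. ring.
Qed.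

End Russo.


Lemma dpl_eq (f g : R -> R) x l1 l2 :
  derivable_pt_lim f x l1 -> (forall y, f y = g y) -> l1 = l2 -> derivable_pt_lim g x l2.
Proof. by move=> H E <-; apply: derivable_pt_lim_ext H. Qed.

Lemma dmin_le (N : nat) (C : code N) z : z \in C -> z != zerow N -> (dmin C <= weight z)%N.
Proof.
move=> zC zn; rewrite /dmin.
have : z \in index_enum (word N) by rewrite mem_index_enum.
elim: (index_enum (word N)) => [//|a s IH].
rewrite inE big_cons => /orP [/eqP <-|zs].
  by rewrite zC zn /= geq_minl.
case: ifP => _; last exact: IH.
by apply: leq_trans (geq_minr _ _) (IH zs).
Qed.

Lemma dmin_leN (N : nat) (C : code N) : (dmin C <= N)%N.
Proof.
rewrite /dmin; elim: (index_enum (word N)) => [|a s IH]; first by rewrite big_nil.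
rewrite big_cons; case: ifP => // _; exact: leq_trans (geq_minr _ _) IH.
Qed.

Lemma ln_le' x y : 0 < x -> x <= y -> ln x <= ln y.
Proof. move=> hx /Rle_lt_or_eq_dec [h|->]; [by apply: Rlt_le; apply: ln_increasing | lra]. Qed.

Section Main.
Variable N : nat.
Variable C : code N.
Hypothesis Clin : is_linear C.
Hypothesis Cprop : proper_code C.
Hypothesis Cd : (2 <= dmin C)%N.

Lemma N_ge2 : (2 <= N)%N.
Proof. exact: leq_trans Cd (dmin_leN C). Qed.

Lemma C_pos : (0 < #|C|)%N.
Proof. by apply/card_gt0P; exists (zerow N); case: Clin. Qed.

Lemma Csub_pos (F : {set 'I_N}) : (0 < #|Csub C F|)%N.
Proof. by apply/card_gt0P; exists (zerow N); apply: zero_Csub. Qed.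

Lemma exit_i_eq (i : 'I_N) p :
  exit_i C i p = \big[Rplus/R0]_(E : {set 'I_N} | i \notin E) (pat1 p E * b2R (ub C i (i |: E))).
Proof.
rewrite /exit_i -(sum_pat_g i (fun F => b2R (ub C i F))).
set T := \big[Rplus/R0]_(E : {set 'I_N}) _.
have inner : forall x, x \in C -> \big[Rplus/R0]_(E : {set 'I_N})
    (/ INR #|C| * pat_prob p E * cond_entropy_i C i x E) = / INR #|C| * T.
  move=> x xC; rewrite /T -rsum_mull; apply: eq_bigr => E _.
  rewrite ce_val //; ring.
rewrite (eq_bigr _ inner) rsum_const; field; apply: not_0_INR; have := C_pos; case: #|C| => //.
Qed.

Definition hsum p := \big[Rplus/R0]_(i : 'I_N) \big[Rplus/R0]_(E : {set 'I_N} | i \notin E)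
   (pat1 p E * b2R (ub C i (i |: E))).

Lemma exit_fun_eq p : exit_fun C p = / INR N * hsum p.
Proof. by rewrite /exit_fun /hsum; congr (_ * _); apply: eq_bigr => i _; rewrite exit_i_eq. Qed.

Definition Gf (E : {set 'I_N}) := log2 (INR #|Csub C E|) / INR N.
Definition G p := \big[Rplus/R0]_(E : {set 'I_N}) (pat_prob p E * Gf E).

Lemma INRN_pos : 0 < INR N.
Proof. apply: lt_0_INR; apply/ltP; have := N_ge2; case: N => //. Qed.

Lemma Gf_step (i : 'I_N) (E : {set 'I_N}) : i \notin E -> Gf (i |: E) - Gf E = b2R (ub C i (i |: E)) / INR N.
Proof.
move=> iE; rewrite /Gf card_Csub_step // mult_INR /log2.
have hp := Csub_pos E; have hN := INRN_pos.
have hm : 0 < INR #|Csub C E| by apply: lt_0_INR; apply/ltP.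
have l2 := ln2_pos.
rewrite ln_mult; last by exact: hm.
  rewrite /b2R; case: (ub C i (i |: E)) => /=; last by rewrite ln_1; field; lra.
  replace (1 + 1) with 2 by ring; field; lra.
by case: (ub C i (i |: E)) => /=; lra.
Qed.

Lemma G_derive p : derivable_pt_lim G p (exit_fun C p).
Proof.
have := russo Gf p.
match goal with |- derivable_pt_lim _ _ ?a -> derivable_pt_lim _ _ ?b => replace b with a end.
  by [].
rewrite exit_fun_eq /hsum -rsum_mull; apply: eq_bigr => i _.
rewrite -rsum_mull; apply: eq_bigr => E iE; rewrite Gf_step //.
field; have := INRN_pos; lra.
Qed.

Lemma pat_1 (E : {set 'I_N}) : pat_prob 1 E = if E == setT then 1 else 0.
Proof.
rewrite /pat_prob; case: eqP => [->|neq].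
  by rewrite cardsT card_ord subnn /=; rewrite pow1; ring.
rewrite Rminus_diag pow_i; first by ring.
apply/ltP; rewrite subn_gt0.
have : E \proper [set: 'I_N] by rewrite properEneq subsetT andbT; apply/eqP.
by move/proper_card; rewrite cardsT card_ord.
Qed.

Lemma W_1 (f : {set 'I_N} -> R) :
  \big[Rplus/R0]_(E : {set 'I_N}) (pat_prob 1 E * f E) = f setT.
Proof.
rewrite (bigD1 setT) //= big1; first by rewrite pat_1 eqxx; ring.
by move=> E /negbTE nE; rewrite pat_1 nE; ring.
Qed.

Lemma G_1 : G 1 = rate C.
Proof.
rewrite /G W_1 /Gf /rate; congr (log2 (INR _) / _); apply: eq_card => z.
by rewrite inE andb_idr // => _; apply/forallP => j; rewrite inE.
Qed.

Lemma pat_ge0 p (E : {set 'I_N}) : 0 <= p <= 1 -> 0 <= pat_prob p E.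
Proof. move=> hp; rewrite /pat_prob; apply: Rmult_le_pos; apply: pow_le; lra. Qed.

Lemma pat1_ge0 p (E : {set 'I_N}) : 0 <= p <= 1 -> 0 <= pat1 p E.
Proof. move=> hp; rewrite /pat1; apply: Rmult_le_pos; apply: pow_le; lra. Qed.

Lemma G_ge0 p : 0 <= p <= 1 -> 0 <= G p.
Proof.
move=> hp; apply: rsum_ge0 => E _; apply: Rmult_le_pos; first exact: pat_ge0.
rewrite /Gf /log2 /Rdiv; apply: Rmult_le_pos; last by apply: Rlt_le; apply: Rinv_0_lt_compat; exact: INRN_pos.
apply: Rmult_le_pos; last by apply: Rlt_le; apply: Rinv_0_lt_compat; exact: ln2_pos.
rewrite -ln_1; apply: ln_le'; first lra.
have := Csub_pos E; case: #|Csub C E| => // n _; rewrite S_INR; have := pos_INR n; lra.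
Qed.

Lemma rsum_ge_term (I : finType) (P : pred I) (F : I -> R) (j : I) :
  (forall i, P i -> 0 <= F i) -> P j -> F j <= \big[Rplus/R0]_(i | P i) F i.
Proof.
move=> H Pj; rewrite (bigD1 j) //=.
have : 0 <= \big[Rplus/R0]_(i | P i && (i != j)) F i.
  by apply: rsum_ge0 => i /andP [Pi _]; apply: H.
lra.
Qed.

Lemma sum_pat_1 p : 0 < p < 1 -> \big[Rplus/R0]_(E : {set 'I_N}) pat_prob p E = 1.
Proof.
move=> hp.
have D : forall c, p <= c <= 1 -> derivable_pt_lim
   (fun q => \big[Rplus/R0]_(E : {set 'I_N}) (pat_prob q E * 1)) c ((fun _ => 0) c).
  move=> c _; apply: (dpl_eq (russo (fun _ => 1) c)) => //.
  rewrite big1 // => i _; rewrite big1 // => E _ /=; ring.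
have [c [Hc _]] := MVT_cor2 _ _ p 1 (proj2 hp) D.
move: Hc; rewrite W_1 => Hc.
have -> : \big[Rplus/R0]_(E : {set 'I_N}) pat_prob p E =
  \big[Rplus/R0]_(E : {set 'I_N}) (pat_prob p E * 1) by apply: eq_bigr => E _; ring.
lra.
Qed.

Lemma hsum_le p : 0 < p < 1 -> hsum p <= INR N.
Proof.
move=> hp; rewrite /hsum.
have -> : INR N = \big[Rplus/R0]_(i : 'I_N) \big[Rplus/R0]_(E : {set 'I_N} | i \notin E) (pat1 p E * (fun _ => 1) (i |: E)).
  transitivity (\big[Rplus/R0]_(i : 'I_N) b2R true).
    rewrite (rsum_b2R (fun _ => true)).
    have -> : [set i : 'I_N | true] = setT by apply/setP => i; rewrite !inE.
    by rewrite cardsT card_ord.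
  apply: eq_bigr => i _; rewrite -(sum_pat_g i (fun _ => 1)) /b2R -[LHS](sum_pat_1 hp).
  by apply: eq_bigr => E _; ring.
apply: rsum_le => i _; apply: rsum_le => E _ /=.
have := pat1_ge0 E (conj (Rlt_le _ _ (proj1 hp)) (Rlt_le _ _ (proj2 hp))).
by rewrite /b2R; case: ub => /=; lra.
Qed.

Lemma hsum_ge0 p : 0 <= p <= 1 -> 0 <= hsum p.
Proof.
move=> hp; apply: rsum_ge0 => i _; apply: rsum_ge0 => E _; apply: Rmult_le_pos.
  exact: pat1_ge0.
by rewrite /b2R; case: ub; lra.
Qed.

Lemma hsum_pos p : 0 < p < 1 -> 0 < hsum p.
Proof.
move=> hp.
have N0 : (0 < N)%N by apply: leq_trans N_ge2.
pose i0 := Ordinal N0.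
have hp' : 0 <= p <= 1 by lra.
have nn : forall (i : 'I_N) (E : {set 'I_N}), 0 <= pat1 p E * b2R (ub C i (i |: E)).
  by move=> i E; apply: Rmult_le_pos; [exact: pat1_ge0 | rewrite /b2R; case: ub; lra].
have T1 : 0 < pat1 p (setT :\ i0) * b2R (ub C i0 (i0 |: (setT :\ i0))).
  rewrite setD1K ?inE //.
  have -> : ub C i0 setT.
    have [x [xC xi]] := Cprop i0.
    apply/existsP; exists x; rewrite xi andbT inE xC /=.
    by apply/forallP => j; rewrite inE.
  rewrite /b2R /pat1 Rmult_1_r; apply: Rmult_lt_0_compat; apply: pow_lt; lra.
have T2 := @rsum_ge_term _ (fun E : {set 'I_N} => i0 \notin E)
   (fun E => pat1 p E * b2R (ub C i0 (i0 |: E))) (setT :\ i0) (fun E _ => nn i0 E) (negbT (setD11 _ _)).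
have T3 := @rsum_ge_term _ (fun _ => true)
   (fun i => \big[Rplus/R0]_(E : {set 'I_N} | i \notin E) (pat1 p E * b2R (ub C i (i |: E)))) i0
   (fun i _ => @rsum_ge0 _ _ _ _ (fun E _ => nn i E)) isT.
rewrite /hsum; exact: Rlt_le_trans T1 (Rle_trans _ _ _ T2 T3).
Qed.

Lemma dmin_posR : 0 < INR (dmin C).
Proof. apply: lt_0_INR; apply/ltP; exact: leq_trans Cd. Qed.

Lemma ind_le x (E : {set 'I_N}) : x \in C ->
  (if [exists x' in C, (x' != x) && [forall j, (j \notin E) ==> (x' j == x j)]] then 1 else 0)
  <= / INR (dmin C) * \big[Rplus/R0]_(i : 'I_N) cond_entropy_i C i x E.
Proof.
move=> xC.
have hd := dmin_posR.
rewrite (eq_bigr (fun i => b2R (ub C i (i |: E)))); last by move=> i _; rewrite ce_val.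
rewrite rsum_b2R.
case: ifP => [/existsP [y /andP [yC /andP [yx /forallP H]]]|_].
  set z := xorw x y.
  have zC : z \in C by apply: xor_in.
  have zn : z != zerow N by rewrite /z xorw_eq0 eq_sym.
  have dz := dmin_le zC zn.
  have sub : (weight z <= #|[set i | ub C i (i |: E)]|)%N.
    apply: subset_leq_card; apply/subsetP => i; rewrite !inE => zi.
    apply/existsP; exists z; rewrite zi andbT inE zC /=.
    apply/forallP => j; apply/implyP; rewrite !inE negb_or => /andP [_ jE].
    rewrite /z xorwE; have := implyP (H j) jE => /eqP ->; by case: (x j).
  have : INR (dmin C) <= INR #|[set i | ub C i (i |: E)]|.
    by apply: le_INR; apply/leP; exact: leq_trans dz sub.
  move=> Hle.
  apply: (Rmult_le_reg_l (INR (dmin C))) => //.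
  rewrite -Rmult_assoc Rinv_r; lra.
apply: Rmult_le_pos; first by apply: Rlt_le; apply: Rinv_0_lt_compat.
exact: pos_INR.
Qed.

Lemma block_le p : 0 <= p <= 1 ->
  block_erasure C p <= INR N / INR (dmin C) * exit_fun C p.
Proof.
move=> hp.
have hd := dmin_posR. have hN := INRN_pos.
apply: Rle_trans (_ : _ <= \big[Rplus/R0]_(x in C) \big[Rplus/R0]_(E : {set 'I_N})
   (/ INR #|C| * pat_prob p E * (/ INR (dmin C) * \big[Rplus/R0]_(i : 'I_N) cond_entropy_i C i x E))) _.
  apply: rsum_le => x xC; apply: rsum_le => E _.
  apply: Rmult_le_compat_l; last exact: ind_le.
  apply: Rmult_le_pos; last exact: pat_ge0.
  apply: Rlt_le; apply: Rinv_0_lt_compat; apply: lt_0_INR; apply/ltP; exact: C_pos.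
apply: Req_le.
have -> : INR N / INR (dmin C) * exit_fun C p =
   / INR (dmin C) * \big[Rplus/R0]_(i : 'I_N) exit_i C i p.
  by rewrite /exit_fun; field; lra.
rewrite /exit_i.
transitivity (\big[Rplus/R0]_(x in C) \big[Rplus/R0]_(E : {set 'I_N}) \big[Rplus/R0]_(i : 'I_N)
   (/ INR (dmin C) * (/ INR #|C| * pat_prob p E * cond_entropy_i C i x E))).
  apply: eq_bigr => x _; apply: eq_bigr => E _.
  rewrite !rsum_mull; set S := \big[Rplus/R0]_(i < N) _; ring.
transitivity (\big[Rplus/R0]_(x in C) \big[Rplus/R0]_(i : 'I_N) \big[Rplus/R0]_(E : {set 'I_N})
   (/ INR (dmin C) * (/ INR #|C| * pat_prob p E * cond_entropy_i C i x E))).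
  by apply: eq_bigr => x _; rewrite exchange_big.
rewrite exchange_big /= -rsum_mull; apply: eq_bigr => i _.
rewrite -rsum_mull; apply: eq_bigr => x _.
by rewrite -rsum_mull.
Qed.

End Main.


Lemma exp_le' x y : x <= y -> exp x <= exp y.
Proof. by case/Rle_lt_or_eq_dec => [H|->]; [left; apply: exp_increasing | right]. Qed.

Section Anal.
Variable N : nat.
Variable C : code N.
Hypothesis Clin : is_linear C.
Hypothesis Cprop : proper_code C.
Hypothesis Cd : (2 <= dmin C)%N.
Variable c : R.
Hypothesis cpos : 0 < c.
Hypothesis HD : forall p : R, 0 < p < 1 ->
     exists l : R, derivable_pt_lim (exit_fun C) p l /\
       l >= c * ln (INR N) * exit_fun C p * (1 - exit_fun C p).

Local Notation h := (exit_fun C).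

Lemma h_pos p : 0 < p < 1 -> 0 < h p.
Proof.
move=> hp; rewrite (exit_fun_eq Clin); apply: Rmult_lt_0_compat.
  by apply: Rinv_0_lt_compat; apply: (INRN_pos Cd).
exact: (hsum_pos Cprop Cd).
Qed.

Lemma h_le1 p : 0 < p < 1 -> h p <= 1.
Proof.
move=> hp; rewrite (exit_fun_eq Clin); have hN := INRN_pos Cd.
have := hsum_le C hp.
move=> H; apply: (Rmult_le_reg_l (INR N)) => //.
rewrite -Rmult_assoc Rinv_r; lra.
Qed.

Lemma lnN_pos : 0 < ln (INR N).
Proof.
rewrite -ln_1; apply: ln_increasing; first lra.
have := N_ge2 Cd; case: N => [//|[//|n]] _.
rewrite !S_INR; have := pos_INR n; lra.
Qed.

Lemma HD' q : exists l, 0 < q < 1 -> derivable_pt_lim h q l /\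
       l >= c * ln (INR N) * h q * (1 - h q).
Proof.
case: (classic (0 < q < 1)) => [hq|nq].
  by have [l Hl] := HD hq; exists l.
by exists 0.
Qed.

Definition hd q := proj1_sig (constructive_indefinite_description _ (HD' q)).
Lemma hdP q : 0 < q < 1 -> derivable_pt_lim h q (hd q) /\
       hd q >= c * ln (INR N) * h q * (1 - h q).
Proof. rewrite /hd; case: constructive_indefinite_description => l Hl /=; exact: Hl. Qed.

Lemma hd_ge0 q : 0 < q < 1 -> 0 <= hd q.
Proof.
move=> hq; have [_ H] := hdP hq.
have := h_pos hq; have := h_le1 hq; have := lnN_pos => *.
have : 0 <= c * ln (INR N) * h q * (1 - h q).
  apply: Rmult_le_pos; last lra.
  apply: Rmult_le_pos; last lra.
  apply: Rmult_le_pos; lra.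
lra.
Qed.

Lemma h_mono s t : 0 < s -> s <= t -> t < 1 -> h s <= h t.
Proof.
move=> s0 /Rle_lt_or_eq_dec [st|<-] t1; last lra.
have [x [Hx Hc]] := MVT_cor2 h hd s t st (fun x hx => proj1 (hdP (conj (Rlt_le_trans _ _ _ s0 (proj1 hx)) (Rle_lt_trans _ _ _ (proj2 hx) t1)))).
have := hd_ge0 (conj (Rlt_trans _ _ _ s0 (proj1 Hc)) (Rlt_trans _ _ _ (proj2 Hc) t1)).
move=> H; have : 0 <= hd x * (t - s) by apply: Rmult_le_pos; lra.
lra.
Qed.

Lemma area s : 0 < s < 1 -> (1 - s) * h s <= rate C.
Proof.
move=> hs.
have [x [Hx Hc]] := MVT_cor2 (G C) h s 1 (proj2 hs) (fun x _ => G_derive Clin Cd x).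
rewrite G_1 in Hx.
have := G_ge0 Clin Cd (conj (Rlt_le _ _ (proj1 hs)) (Rlt_le _ _ (proj2 hs))).
have := h_mono (proj1 hs) (Rlt_le _ _ (proj1 Hc)) (proj2 Hc).
move=> H1 H2.
have : (1 - s) * h s <= h x * (1 - s) by rewrite Rmult_comm; apply: Rmult_le_compat_r; lra.
lra.
Qed.

Lemma log_bound p q : 0 < p -> p < q -> q < 1 -> rate C < 1 - q ->
  h p <= exp (- (c * ln (INR N) * (1 - rate C / (1 - q)) * (q - p))).
Proof.
move=> p0 pq q1 rq.
set a := rate C / (1 - q).
have ha : h q <= a.
  rewrite /a; have := area (conj (Rlt_trans _ _ _ p0 pq) q1) => H.
  apply: (Rmult_le_reg_l (1 - q)); first lra.
  have -> : (1 - q) * (rate C / (1 - q)) = rate C by field; lra.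
  lra.
have a1 : a < 1.
  rewrite /a; apply: (Rmult_lt_reg_l (1 - q)); first lra.
  have -> : (1 - q) * (rate C / (1 - q)) = rate C by field; lra.
  lra.
have inI : forall x, p <= x <= q -> 0 < x < 1 by move=> x hx; lra.
have D : forall x, p <= x <= q -> derivable_pt_lim (fun y => ln (h y)) x (hd x / h x).
  move=> x hx; have hx' := inI x hx.
  have := derivable_pt_lim_comp h ln x (hd x) (/ h x) (proj1 (hdP hx')) (derivable_pt_lim_ln (h x) (h_pos hx')).
  move=> H; apply: (dpl_eq H) => //; rewrite /Rdiv Rmult_comm //.
have [x [Hx Hc]] := MVT_cor2 _ _ p q pq D.
have hx : 0 < x < 1 by lra.
have hxp := h_pos hx.
have hxa : h x <= a by apply: Rle_trans (h_mono (proj1 hx) (Rlt_le _ _ (proj2 Hc)) q1) ha.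
have lN := lnN_pos.
have Hd : c * ln (INR N) * (1 - a) <= hd x / h x.
  have [_ H] := hdP hx.
  have num : 0 <= hd x - c * ln (INR N) * h x * (1 - a).
    have : c * ln (INR N) * h x * (1 - a) <= c * ln (INR N) * h x * (1 - h x).
      apply: Rmult_le_compat_l; last lra.
      apply: Rmult_le_pos; last lra; apply: Rmult_le_pos; lra.
    lra.
  have : 0 <= (hd x - c * ln (INR N) * h x * (1 - a)) * / h x.
    by apply: Rmult_le_pos => //; left; apply: Rinv_0_lt_compat.
  have -> : (hd x - c * ln (INR N) * h x * (1 - a)) * / h x = hd x / h x - c * ln (INR N) * (1 - a).
    by field; lra.
  lra.
have lq : ln (h q) <= 0.
  rewrite -ln_1; apply: ln_le'; [apply: h_pos; lra | lra].
have : c * ln (INR N) * (1 - a) * (q - p) <= hd x / h x * (q - p).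
  apply: Rmult_le_compat_r; lra.
move=> H.
rewrite -(exp_ln (h p)); last by apply: h_pos; lra.
cbv beta in Hx; apply: exp_le'; rewrite /a in H Hx *; lra.
Qed.

Lemma key p q : 0 < p -> p < q -> q < 1 -> rate C < 1 - q ->
  block_erasure C p <= exp (ln (INR N) - ln (INR (dmin C)) -
      c * ln (INR N) * (1 - rate C / (1 - q)) * (q - p)).
Proof.
move=> p0 pq q1 rq.
have hN := INRN_pos Cd. have hd := dmin_posR Cd.
set X := c * ln (INR N) * (1 - rate C / (1 - q)) * (q - p).
have -> : exp (ln (INR N) - ln (INR (dmin C)) - X) = INR N / INR (dmin C) * exp (- X).
  rewrite /Rminus !exp_plus exp_Ropp exp_ln // exp_ln //.
apply: Rle_trans (block_le Clin Cd (conj (Rlt_le _ _ p0) (Rlt_le _ _ (Rlt_trans _ _ _ pq q1)))) _.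
apply: Rmult_le_compat_l.
  by apply: Rmult_le_pos; [lra | left; apply: Rinv_0_lt_compat].
exact: log_bound.
Qed.

End Anal.

Lemma block_ge0 (N : nat) (C : code N) p : 0 <= p <= 1 -> 0 <= block_erasure C p.
Proof.
move=> hp; apply: rsum_ge0 => x _; apply: rsum_ge0 => E _.
apply: Rmult_le_pos; last by case: ifP => _; lra.
apply: Rmult_le_pos; last exact: pat_ge0.
case: (posnP #|C|) => [->|hpos]; first by rewrite /= Rinv_0; lra.
by left; apply: Rinv_0_lt_compat; apply: lt_0_INR; apply/ltP.
Qed.

Lemma block_0 (N : nat) (C : code N) : block_erasure C 0 = 0.
Proof.
apply: big1 => x _; apply: big1 => E _.
case: (eqVneq E set0) => [->|nE].
  case: ifP => [/existsP [y /andP [_ /andP [yx /forallP H]]]|_]; last by ring.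
  exfalso; move/negP: yx; apply; apply/eqP/ffunP => j.
  by apply/eqP; apply: (implyP (H j)); rewrite inE.
rewrite /pat_prob pow_i; first by ring.
by apply/ltP; rewrite card_gt0.
Qed.


Unset Implicit Arguments.
Theorem theorem4 (N : nat -> nat) (C : forall n, code (N n)) (r c : R) :
  (forall n, is_linear (C n) /\ proper_code (C n) /\ (2 <= dmin (C n))%N) ->
  (forall M : nat, exists n0 : nat, forall n : nat, (n0 <= n)%N -> (M <= N n)%N) ->
  0 < r < 1 ->
  Un_cv (fun n => rate (C n)) r ->
  0 < c ->
  (forall (n : nat) (p : R), 0 < p < 1 ->
     exists l : R, derivable_pt_lim (exit_fun (C n)) p l /\
       l >= c * ln (INR (N n)) * exit_fun (C n) p * (1 - exit_fun (C n) p)) ->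
  Un_cv (fun n => ln (INR (dmin (C n))) / ln (INR (N n))) 1 ->
  forall p : R, 0 <= p < 1 - r -> Un_cv (fun n => block_erasure (C n) p) 0.
Proof.
move=> Hc HN hr Hrate hc HD Hd p hp.
case: (Req_dec p 0) => [->|p0'].
  move=> eta heta; exists 0%nat => n _; rewrite block_0 /Rdist Rminus_0_r Rabs_R0; lra.
have p0 : 0 < p by lra.
set e0 := (1 - r - p) / 3.
have he0 : 0 < e0 by rewrite /e0; lra.
set q := p + e0.
set as0 := (r + e0) / (r + 2 * e0).
have has0 : 0 <= as0 < 1.
  rewrite /as0; split.
    apply: Rmult_le_pos; first lra; left; apply: Rinv_0_lt_compat; lra.
  apply: (Rmult_lt_reg_l (r + 2 * e0)); first lra.
  have -> : (r + 2 * e0) * ((r + e0) / (r + 2 * e0)) = r + e0 by field; lra.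
  lra.
set th := c * (1 - as0) * e0 / 2.
have hth : 0 < th.
  rewrite /th; apply: Rmult_lt_0_compat; last lra.
  apply: Rmult_lt_0_compat; last lra; apply: Rmult_lt_0_compat; lra.
move=> eta heta.
have [n1 Hn1] := Hrate e0 he0.
have [n2 Hn2] := Hd th hth.
set K := exp (- ln eta / th).
have hK : 0 < / K by apply: Rinv_0_lt_compat; apply: exp_pos.
have [M0 [HM0 M0pos]] := archimed_cor1 (/ K) hK.
have [n3 Hn3] := HN M0.
exists (Nat.add (Nat.add n1 n2) n3) => n hn.
have hn1 : (n >= n1)%coq_nat by lia.
have hn2 : (n >= n2)%coq_nat by lia.
have hn3 : (n3 <= n)%N by apply/leP; lia.
have [Clin [Cprop Cd]] := Hc n.
have hM0 : 0 < INR M0 by apply: lt_0_INR.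
have MK : K < INR M0.
  have := Rinv_0_lt_contravar (/ INR M0) (/ K) (Rinv_0_lt_compat _ hM0) HM0.
  by rewrite !Rinv_inv.
have lnM0 : - ln eta / th < ln (INR M0).
  rewrite -[X in X < _](ln_exp (- ln eta / th)); apply: ln_increasing => //; exact: exp_pos.
have NM : INR M0 <= INR (N n) by apply: le_INR; apply/leP; apply: Hn3.
have lnN : ln (INR M0) <= ln (INR (N n)) by apply: ln_le'.
have hrate := Hn1 n hn1; rewrite /Rdist in hrate.
have hr1 : rate (C n) < r + e0 by move: hrate => /Rabs_def2 [] ; lra.
have hdd := Hn2 n hn2; rewrite /Rdist in hdd.
have lNp : 0 < ln (INR (N n)) by apply: lnN_pos Cd.
have hq1 : q < 1 by rewrite /q /e0; lra.
have hpq : p < q by rewrite /q; lra.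
have h1q : 1 - q = r + 2 * e0 by rewrite /q /e0; field.
have rq : rate (C n) < 1 - q by lra.
have KB := key Clin Cprop Cd hc (HD n) p0 hpq hq1 rq.
set L := ln (INR (N n)) in KB lNp lnN hdd *.
set D := ln (INR (dmin (C n))) in KB hdd.
set an := rate (C n) / (1 - q) in KB.
have han : an <= as0.
  rewrite /an /as0 h1q; apply: Rmult_le_compat_r; last lra.
  left; apply: Rinv_0_lt_compat; lra.
have hD : (1 - th) * L < D.
  move: hdd => /Rabs_def2 [h1 h2].
  have : 1 - th < D / L by lra.
  move=> H; have := Rmult_lt_compat_r L _ _ lNp H.
  by rewrite /Rdiv Rmult_assoc Rinv_l; lra.
have hX : c * L * (1 - as0) * e0 <= c * L * (1 - an) * (q - p).
  have -> : q - p = e0 by rewrite /q; ring.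
  apply: Rmult_le_compat_r; first lra.
  apply: Rmult_le_compat_l; last lra.
  apply: Rmult_le_pos; lra.
have hth2 : c * L * (1 - as0) * e0 = 2 * th * L by rewrite /th; field.
have hexp : L - D - c * L * (1 - an) * (q - p) < ln eta.
  have : ln eta > - th * L.
    have := Rmult_lt_compat_l th _ _ hth lnM0.
    have -> : th * (- ln eta / th) = - ln eta by field; lra.
    move=> H1; have : th * ln (INR M0) <= th * L by apply: Rmult_le_compat_l; lra.
    lra.
  lra.
have PB0 : 0 <= block_erasure (C n) p by apply: block_ge0; lra.
rewrite /Rdist Rminus_0_r Rabs_pos_eq //.
apply: Rle_lt_trans KB _.
rewrite -[X in _ < X](exp_ln eta) //.
exact: exp_increasing.
Qed.
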